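(* Let $R$ be a mixed characteristic dp-minimal DVR and let $S$ be a finite-index subring of $R$. Then $S$ is dp-minimal and Noetherian.
   Context: Rings are commutative and unital; a ring is dp-minimal if $(R,+,\cdot)$ has dp-rank $1$. A DVR is a discrete valuation ring; a dp-minimal DVR has fraction field of characteristic $0$, and it is called mixed characteristic if its residue field is finite. A finite-index subring of $R$ is a subring $S\subseteq R$ of finite index in the additive group $(R,+)$. *)

(* Defs.v *)
From HB Require Import structures.
From mathcomp Require Import all_boot all_order all_algebra.
Set Implicit Arguments. Unset Strict Implicit. Unset Printing Implicit Defensive.
Import GRing.Theory.
Local Open Scope ring_scope.

Inductive rterm : Type :=
  | TVar of nat
  | TZero | TOne
  | TAdd of rterm & rterm
  | TMul of rterm & rterm
  | TOpp of rterm.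

Inductive rform : Type :=
  | FEq of rterm & rterm
  | FNot of rform
  | FAnd of rform & rform
  | FEx of nat & rform.

Section Semantics.
Variable R : comPzRingType.

Fixpoint teval (e : nat -> R) (t : rterm) : R :=
  match t with
  | TVar n => e n
  | TZero => 0
  | TOne => 1
  | TAdd t1 t2 => teval e t1 + teval e t2
  | TMul t1 t2 => teval e t1 * teval e t2
  | TOpp t1 => - teval e t1
  end.

Definition upd (e : nat -> R) (n : nat) (a : R) : nat -> R :=
  fun k => if k == n then a else e k.

(** Satisfaction in the substructure with universe [D] (quantifiers range
    over [D]); for [D] a subring this is satisfaction in the ring (D,+,.). *)
Fixpoint sat (D : R -> Prop) (e : nat -> R) (f : rform) : Prop :=
  match f with
  | FEq t1 t2 => teval e t1 = teval e t2
  | FNot g => ~ sat D e g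
  | FAnd g h => sat D e g /\ sat D e h
  | FEx n g => exists a, D a /\ sat D (upd e n a) g
  end.

(** dp-minimality of the structure (D,+,.): there is no ICT pattern of depth 2
    in one variable.  By compactness (and elementarity of the structure in its
    monster model) this is equivalent to: there are no formulas phi(x;y),
    psi(x;z) (x = variable 0, the other variables being parameters) admitting
    arbitrarily large finite ICT patterns with parameters from D. *)
Definition dp_minimal (D : R -> Prop) : Prop :=
  ~ exists phi psi : rform,
      forall n : nat,
      exists b c : nat -> nat -> R,
        (forall i k, D (b i k)) /\ (forall j k, D (c j k)) /\
        forall i j, (i < n)%N -> (j < n)%N ->
          exists a, D a /\
            forall k, (k < n)%N ->
              (sat D (upd (b k) 0 a) phi <-> k = i) /\
              (sat D (upd (c k) 0 a) psi <-> k = j).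

Definition is_subring (S : R -> Prop) : Prop :=
  [/\ S 1, (forall x y, S x -> S y -> S (x - y)) & (forall x y, S x -> S y -> S (x * y))].

Definition finite_index (S : R -> Prop) : Prop :=
  exists reps : seq R, forall r, exists2 c, c \in reps & S (r - c).

Definition is_ideal_of (S I : R -> Prop) : Prop :=
  [/\ forall x, I x -> S x, I 0, (forall x y, I x -> I y -> I (x + y))
    & (forall s x, S s -> I x -> I (s * x))].

Definition fg_ideal_of (S I : R -> Prop) : Prop :=
  exists g : seq R, (forall x, x \in g -> I x) /\
    forall x, I x -> exists c : nat -> R, (forall i, S (c i)) /\
       x = \sum_(i < size g) c i * g`_i.

Definition noetherian_sub (S : R -> Prop) : Prop :=
  forall I, is_ideal_of S I -> fg_ideal_of S I.

End Semantics.

Definition is_DVR (R : idomainType) : Prop :=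
  exists pi : R, pi != 0 /\ pi \isn't a GRing.unit /\
    forall x : R, x != 0 -> exists u n, u \is a GRing.unit /\ x = u * pi ^+ n.

(** Finite residue field: R modulo its maximal ideal (= the non-units of the
    local ring R) is finite. *)
Definition finite_residue_field (R : idomainType) : Prop :=
  exists reps : seq R, forall r, exists2 c, c \in reps & (r - c) \isn't a GRing.unit.

Definition mixed_char_dpmin_DVR (R : idomainType) : Prop :=
  [/\ is_DVR R, dp_minimal (fun _ : R => True) & finite_residue_field R].

(* Main.v *)
Require Import Defs.
From mathcomp Require Import all_boot all_order all_algebra.
From mathcomp Require Import zify ring.
From Stdlib Require Import Classical ClassicalEpsilon.
Set Implicit Arguments. Unset Strict Implicit. Unset Printing Implicit Defensive.
Import GRing.Theory.
Local Open Scope ring_scope.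

Section Trans.
Variable R : idomainType.
Variable S : R -> Prop.
Variable p : R.
Variable Ls : seq R.
Let N := size Ls.
Let T := fun _ : R => True.

Definition par (w : nat) : R := if w == 1%N then p else nth 0 Ls ((w - 5) %/ 2).

Definition FOr a b := FNot (FAnd (FNot a) (FNot b)).

Definition atomf (v i : nat) : rform :=
  FEx 3 (FEq (TVar v) (TAdd (TVar (i.*2 + 5)) (TMul (TVar 1) (TVar 3)))).

Fixpoint memf (v n k : nat) : rform :=
  match n with
  | 0 => FNot (FEq TZero TZero)
  | n'.+1 => FOr (atomf v k) (memf v n' k.+1)
  end.

Lemma sat_atomf e' v i : (forall w, odd w -> e' w = par w) -> ~~ odd v ->
  (sat T e' (atomf v i) <-> exists y, e' v = nth 0 Ls i + p * y).
Proof.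
move=> He Hv /=.
have h1 : (v == 3)%N = false by apply/negbTE; apply/eqP => h; rewrite h in Hv.
have h2 : (i.*2 + 5 == 3)%N = false by apply/eqP; lia.
have h3 : (1 == 3)%N = false by [].
have h4 : par (i.*2 + 5) = nth 0 Ls i.
  rewrite /par; have -> : (i.*2 + 5 == 1)%N = false by apply/eqP; lia.
  by rewrite addnK -muln2 mulnK.
have o1 : odd (i.*2 + 5) by rewrite oddD odd_double.
rewrite /upd h1 h2 h3 (He _ o1) h4 (He 1%N erefl) eqxx.
have -> : par 1 = p by rewrite /par.
split; first by move=> [a [_ ->]]; exists a.
by move=> [y ->]; exists y.
Qed.

Lemma sat_memf e' v : (forall w, odd w -> e' w = par w) -> ~~ odd v ->
  forall n k, (sat T e' (memf v n k) <->
     exists i, (k <= i < k + n)%N /\ exists y, e' v = nth 0 Ls i + p * y).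
Proof.
move=> He Hv; elim=> [|n IH] k /=.
  split; first by case; reflexivity.
  by move=> [i [/andP [h1 h2]]]; rewrite addn0 in h2; move: (leq_trans h2 h1); rewrite ltnn.
change (~ (~ sat T e' (atomf v k) /\ ~ sat T e' (memf v n k.+1)) <-> (exists i, (k <= i < k + n.+1)%N /\ exists y, e' v = nth 0 Ls i + p * y)).
rewrite sat_atomf // IH.
split.
  move=> H. apply: NNPP => Hn; apply: H; split.
    by move=> [y Hy]; apply: Hn; exists k; split; [rewrite leqnn addnS ltnS leq_addr|exists y].
  move=> [i [/andP [h1 h2] Hy]]; apply: Hn; exists i; split => //.
  by rewrite addnS -addSn h2 andbT ltnW.
move=> [i [/andP [h1 h2] Hy]] [Ha Hb].
case: (ltngtP k i) => hki.
  by apply: Hb; exists i; split => //; rewrite hki /= addSn -addnS.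
  by move: (leq_ltn_trans h1 hki); rewrite ltnn.
by subst; apply: Ha.
Qed.


Fixpoint tt (t : rterm) : rterm :=
  match t with
  | TVar n => TVar n.*2
  | TZero => TZero
  | TOne => TOne
  | TAdd a b => TAdd (tt a) (tt b)
  | TMul a b => TMul (tt a) (tt b)
  | TOpp a => TOpp (tt a)
  end.

Fixpoint tf (f : rform) : rform :=
  match f with
  | FEq a b => FEq (tt a) (tt b)
  | FNot g => FNot (tf g)
  | FAnd g h => FAnd (tf g) (tf h)
  | FEx n g => FEx n.*2 (FAnd (memf n.*2 N 0) (tf g))
  end.

Lemma teval_tt (e e' : nat -> R) t : (forall v, e' v.*2 = e v) -> teval e' (tt t) = teval e t.
Proof. by move=> H; elim: t => //= [a -> b ->|a -> b ->|a ->]. Qed.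

Hypothesis HSadd : forall x y, S x -> S y -> S (x + y).
Hypothesis HLs : forall i, (i < N)%N -> S (nth 0 Ls i).
Hypothesis HpS : forall y, S (p * y).
Hypothesis Hcov : forall x, S x -> exists i, (i < N)%N /\ exists y, x = nth 0 Ls i + p * y.

Lemma sat_tf f : forall e e', (forall v, e' v.*2 = e v) -> (forall w, odd w -> e' w = par w) ->
  (sat T e' (tf f) <-> sat S e f).
Proof.
elim: f => [a b|g IH|g IHg h IHh|n g IH] e e' H1 H2 /=.
- by rewrite !(teval_tt _ H1).
- by rewrite (IH e e' H1 H2).
- by rewrite (IHg e e' H1 H2) (IHh e e' H1 H2).
- have K a : (forall v, upd e' n.*2 a v.*2 = upd e n a v) /\
             (forall w, odd w -> upd e' n.*2 a w = par w).
    split; first by move=> v; rewrite /upd (inj_eq (can_inj doubleK)) H1.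
    move=> w ow; rewrite /upd; case: eqP => [E|_]; last by rewrite H2.
    by rewrite E odd_double in ow.
  have M a : sat T (upd e' n.*2 a) (memf n.*2 N 0) <-> S a.
    rewrite sat_memf; [|by case: (K a)|by rewrite odd_double].
    rewrite /upd eqxx; split.
      by move=> [i [/andP [_ hi] [y ->]]]; apply: HSadd; [apply: HLs|apply: HpS].
    by move=> /Hcov [i [hi hy]]; exists i.
  split.
    move=> [a [_ [Ma Sa]]]; exists a; split; first by apply/M.
    by case: (K a) => k1 k2; rewrite -(IH _ _ k1 k2).
  move=> [a [Sa Ha]]; exists a; split => //; split; first by apply/M.
  by case: (K a) => k1 k2; rewrite (IH _ _ k1 k2).
Qed.

Lemma dp_transfer : dp_minimal T -> dp_minimal S.
Proof.
move=> HR [phi [psi H]]; apply: HR; exists (tf phi), (tf psi) => n.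
have [b [c [Hb [Hc Hp]]]] := H n.
pose lift (e : nat -> R) := fun w => if odd w then par w else e w./2.
exists (fun i => lift (b i)), (fun j => lift (c j)); split => //; split => //.
move=> i j hi hj; have [a [Sa Ha]] := Hp i j hi hj; exists a; split => //.
have L e : (forall v, upd (lift e) 0 a v.*2 = upd e 0 a v) /\
           (forall w, odd w -> upd (lift e) 0 a w = par w).
  split.
    move=> v; rewrite /upd /lift odd_double doubleK.
    by case: v.
  by move=> w ow; rewrite /upd /lift ow; case: eqP => // E; rewrite E in ow.
move=> k hk; have [h1 h2] := Ha k hk.
case: (L (b k)) => k1 k2; case: (L (c k)) => k3 k4.
by rewrite (sat_tf _ k1 k2) (sat_tf _ k3 k4).
Qed.

End Trans.
Section Alg.
Variable R : idomainType.

Lemma choose_list (L : seq R) (Q : R -> R -> Prop) : exists M : seq R,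
  (forall m, m \in M -> exists l, l \in L /\ Q l m) /\
  (forall l, l \in L -> (exists m, Q l m) -> exists m, m \in M /\ Q l m).
Proof.
elim: L => [|a L [M [H1 H2]]]; first by exists [::]; split.
case: (classic (exists m, Q a m)) => [[m Hm]|Hn].
  exists (m :: M); split.
    move=> x; rewrite inE => /orP [/eqP ->|/H1 [l [hl hq]]]; first by exists a; rewrite mem_head.
    by exists l; rewrite inE hl orbT.
  move=> l; rewrite inE => /orP [/eqP -> _|hl hx]; first by exists m; rewrite mem_head.
  by have [x [hx1 hx2]] := H2 l hl hx; exists x; rewrite inE hx1 orbT.
exists M; split.
  by move=> x /H1 [l [hl hq]]; exists l; rewrite inE hl orbT.
move=> l; rewrite inE => /orP [/eqP -> //|hl hx].
exact: H2.
Qed.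

Variable S : R -> Prop.
Hypothesis HS : is_subring S.

Lemma S1 : S 1. Proof. by case: HS. Qed.
Lemma SB x y : S x -> S y -> S (x - y). Proof. by case: HS => _ h _; apply: h. Qed.
Lemma SM x y : S x -> S y -> S (x * y). Proof. by case: HS => _ _ h; apply: h. Qed.
Lemma S0 : S 0. Proof. by rewrite -(subrr 1); apply: SB; apply: S1. Qed.
Lemma SN x : S x -> S (- x). Proof. by move=> h; rewrite -sub0r; apply: SB => //; apply: S0. Qed.
Lemma SD x y : S x -> S y -> S (x + y).
Proof. by move=> hx hy; rewrite -(opprK y); apply: SB => //; apply: SN. Qed.

Variable pi : R.
Hypothesis pi0 : pi != 0.
Hypothesis pinu : pi \isn't a GRing.unit.
Hypothesis Hdec : forall x : R, x != 0 -> exists u n, u \is a GRing.unit /\ x = u * pi ^+ n.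

Lemma expr_inj a b : pi ^+ a = pi ^+ b -> a = b.
Proof.
wlog: a b / (a <= b)%N => [W E|hab E].
  by case: (leqP a b) => h; [apply: W|symmetry; apply: W => //; apply: ltnW].
case: (ltngtP a b) => // hlt; last by move: hab; rewrite leqNgt hlt.
have E2 : pi ^+ a * 1 = pi ^+ a * pi ^+ (b - a) by rewrite mulr1 -exprD subnKC.
have := mulfI (expf_neq0 a pi0) E2 => E3.
have : pi ^+ (b - a) \is a GRing.unit by rewrite -E3 unitr1.
by rewrite unitrX_pos ?subn_gt0 // (negbTE pinu).
Qed.

Lemma modpi t c : (t - c) \isn't a GRing.unit -> exists y, t - c = pi * y.
Proof.
move=> hu; case: (eqVneq (t - c) 0) => [->|nz]; first by exists 0; rewrite mulr0.
have [u [[|n] [Hu E]]] := Hdec nz.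
  by move: hu; rewrite E expr0 mulr1 Hu.
by exists (u * pi ^+ n); rewrite E exprS; ring.
Qed.

Hypothesis Hres : exists reps : seq R, forall r, exists2 c, c \in reps & (r - c) \isn't a GRing.unit.

Lemma finite_mod m : exists L : seq R, forall r, exists l, l \in L /\ exists y, r = l + pi ^+ m * y.
Proof.
have [rr Hrr] := Hres.
elim: m => [|m [L HL]].
  by exists [:: 0]; move=> r; exists 0; split; [rewrite mem_head|exists r; rewrite expr0; ring].
exists [seq l + pi ^+ m * c | l <- L, c <- rr] => r.
have [l [hl [t ->]]] := HL r.
have [c hc hu] := Hrr t.
have [y Ey] := modpi hu.
exists (l + pi ^+ m * c); split; first by apply: (allpairs_f (fun l c => l + pi ^+ m * c)).
exists y; rewrite exprS.
have -> : t = c + pi * y by rewrite -Ey; ring.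
ring.
Qed.

Lemma conductor (reps : seq R) : (forall r, exists2 c, c \in reps & S (r - c)) ->
  exists z, z != 0 /\ forall r, S (z * r).
Proof.
move=> Hreps.
case Er: reps => [|c0 reps'].
  by have [c] := Hreps 0; rewrite Er.
have rep : forall r, {c | c \in reps /\ S (r - c)}.
  move=> r; apply: constructive_indefinite_description.
  by have [c h1 h2] := Hreps r; exists c.
set n := size reps'.
set cs := 1 :: reps.
pose F (r : R) : {ffun 'I_(size cs) -> 'I_n.+1} :=
  [ffun i : 'I_(size cs) => inord (index (proj1_sig (rep (r * nth 0 cs i))) reps)].
have key x y : F x = F y -> forall i, (i < size cs)%N -> S ((x - y) * nth 0 cs i).
  move=> E i hi.
  have : F x (Ordinal hi) = F y (Ordinal hi) by rewrite E.
  rewrite !ffunE => /(congr1 val).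
  case: (rep (x * nth 0 cs i)) => a [ha Sa]; case: (rep (y * nth 0 cs i)) => b [hb Sb] /=.
  have szr : size reps = n.+1 by rewrite Er.
  have ia : (index a reps < n.+1)%N by rewrite -szr index_mem.
  have ib : (index b reps < n.+1)%N by rewrite -szr index_mem.
  rewrite !inordK // => Eab.
  have eab : a = b by rewrite -(nth_index 0 ha) -(nth_index 0 hb) Eab.
  subst b.
  have -> : (x - y) * nth 0 cs i = (x * nth 0 cs i - a) - (y * nth 0 cs i - a) by ring.
  exact: SB.
set K := #|{ffun 'I_(size cs) -> 'I_n.+1}|.
pose g (j : 'I_K.+1) := F (pi ^+ j).
have [j1 [j2 [Eg Nj]]] : exists j1 j2, g j1 = g j2 /\ j1 <> j2.
  apply: NNPP => Hn.
  have inj : injective g.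
    move=> a b E; apply: NNPP => Nab; apply: Hn; by exists a, b.
  by move: (leq_card g inj); rewrite card_ord ltnn.
exists (pi ^+ j1 - pi ^+ j2); split.
  rewrite subr_eq0; apply/eqP => E; apply: Nj; apply: val_inj; exact: expr_inj.
move=> r; have [c hc Sc] := Hreps r.
have -> : (pi ^+ j1 - pi ^+ j2) * r =
   (pi ^+ j1 - pi ^+ j2) * nth 0 cs 0 * (r - c) + (pi ^+ j1 - pi ^+ j2) * nth 0 cs (index c reps).+1.
  by rewrite /= nth_index //; ring.
apply: SD; first by apply: SM => //; apply: key.
apply: key => //; by rewrite /= ltnS index_mem.
Qed.

End Alg.

Definition span (R : idomainType) (S : R -> Prop) (g : seq R) (x : R) :=
  exists c : nat -> R, (forall i, S (c i)) /\ x = \sum_(i < size g) c i * g`_i.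

Section Span.
Variable R : idomainType.
Variable S : R -> Prop.
Hypothesis HS : is_subring S.
Variable g : seq R.

Lemma span_add x y : span S g x -> span S g y -> span S g (x + y).
Proof.
move=> [c [hc ->]] [d [hd ->]]; exists (fun i => c i + d i); split.
  by move=> i; apply: SD.
by rewrite -big_split /=; apply: eq_bigr => i _; rewrite mulrDl.
Qed.

Lemma span_scale s x : S s -> span S g x -> span S g (s * x).
Proof.
move=> hs [c [hc ->]]; exists (fun i => s * c i); split; first by move=> i; apply: SM.
by rewrite mulr_sumr; apply: eq_bigr => i _; rewrite mulrA.
Qed.

Lemma span_mem x : x \in g -> span S g x.
Proof.
move=> hx; exists (fun i => if i == index x g then 1 else 0); split.
  by move=> i; case: ifP => _; [apply: S1|apply: S0].
have hi : (index x g < size g)%N by rewrite index_mem.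
rewrite (bigD1 (Ordinal hi)) //= eqxx mul1r nth_index // big1 ?addr0 //.
move=> i hne; case: eqP => [E|_]; last by rewrite mul0r.
move: hne; have -> : i = Ordinal hi by apply: val_inj.
by rewrite eqxx.
Qed.

End Span.

Theorem lemma8p7 (R : idomainType) (S : R -> Prop) :
  mixed_char_dpmin_DVR R -> is_subring S -> finite_index S ->
  dp_minimal S /\ noetherian_sub S.
Proof.
move=> [[pi [pi0 [pinu Hdec]]] dpR Hres] HS [reps Hreps].
have [z [z0 Hz]] := conductor HS pi0 pinu Hreps.
have [u [k [Hu Ez]]] := Hdec z z0.
set p := pi ^+ k.
have HpS : forall y, S (p * y).
  move=> y; have -> : p * y = z * (u^-1 * y).
    have E : u^-1 * u = 1 by rewrite mulVr.
    rewrite Ez; transitivity ((u^-1 * u) * (p * y)); [by rewrite E mul1r | rewrite /p; ring].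
  exact: Hz.
split.
  have [L HL] := finite_mod Hdec Hres k.
  have [Ls [HLs1 HLs2]] := choose_list L (fun l m => m = l /\ S l).
  apply: (dp_transfer (p := p) (Ls := Ls)) => //.
  - by move=> x y; apply: SD.
  - move=> i hi; have := HLs1 _ (mem_nth 0 hi); by move=> [l [_ [-> ?]]].
  - move=> x Sx; have [l [hl [y Ey]]] := HL x.
    have Sl : S l.
      have -> : l = x - p * y by rewrite Ey /p; ring.
      by apply: SB => //; apply: HpS.
    have [m [hm [Eml _]]] := HLs2 l hl (ex_intro _ l (conj erefl Sl)).
    exists (index m Ls); split; first by rewrite index_mem.
    by exists y; rewrite nth_index // Eml.
move=> I [HIS HI0 HIadd HImul].
case: (classic (exists x0, I x0 /\ x0 != 0)) => [[x0 [Ix0 nx0]]|Hn]; last first.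
  exists [::]; split => // x Ix; exists (fun=> 0); split; first by move=> _; apply: S0.
  rewrite big_ord0; apply: NNPP => nx; apply: Hn; exists x; split => //; exact/eqP.
have [v [j [Hv Ex0]]] := Hdec x0 nx0.
set q := pi ^+ (j + k).
have HqI : forall r, I (q * r).
  move=> r; have -> : q * r = (v^-1 * (p * r)) * x0.
    rewrite Ex0 /q exprD; have E : v^-1 * v = 1 by rewrite mulVr.
    transitivity ((v^-1 * v) * (pi ^+ j * p * r)); [by rewrite E mul1r /p; ring | rewrite /p; ring].
  apply: HImul => //; have -> : v^-1 * (p * r) = p * (v^-1 * r) by ring.
  exact: HpS.
have [L HL] := finite_mod Hdec Hres (j + k).
have [M [HM1 HM2]] := choose_list L (fun l m => I m /\ exists y, m = l + q * y).
exists (M ++ [seq q * c | c <- reps] ++ [:: q]); split.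
  move=> x; rewrite !mem_cat => /or3P [hx|/mapP [c _ ->]|].
  - by have [l [_ [Ix _]]] := HM1 x hx.
  - exact: HqI.
  - by rewrite inE => /eqP ->; rewrite -[q]mulr1; apply: HqI.
move=> x Ix; have [l [hl [y Ey]]] := HL x.
have [m [hm [Im [y1 Ey1]]]] := HM2 l hl (ex_intro _ x (conj Ix (ex_intro _ y Ey))).
have [c hc Sc] := Hreps (y - y1).
have -> : x = m + (q * c + (y - y1 - c) * q) by rewrite Ey Ey1 -/q; ring.
have HSpan : forall w, span S (M ++ [seq q * c | c <- reps] ++ [:: q]) w ->
   exists c : nat -> R, (forall i, S (c i)) /\ w = \sum_(i < size (M ++ [seq q * c | c <- reps] ++ [:: q])) c i * (M ++ [seq q * c | c <- reps] ++ [:: q])`_i by [].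
apply: HSpan; apply: span_add => //.
  by apply: span_mem => //; rewrite mem_cat hm.
apply: span_add => //.
  by apply: span_mem => //; rewrite !mem_cat map_f ?orbT.
apply: span_scale => //; apply: span_mem => //.
by rewrite !mem_cat mem_head !orbT.
Qed.
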